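(* Let $\mathbf{c}\in\mathbb{R}^n_{\ge0}$, $0<r\le 1$ with $\|\mathbf{c}\|_1\le r$, and let $M>0$. Then $$\frac{\Psi_n(1,r)}{\Psi_n\big(1+\tfrac nM,\ r(1+\tfrac nM)\big)}\ge\Big(\frac{M}{M+n}\Big)^{2n}.$$
   Context: Given $\mathbf{c}=(c_1,\dots,c_n)$, define $\Psi_0(u,v)=1$ if $u\ge0$ and $v\ge0$, and $0$ otherwise, and inductively for $i=1,\dots,n$, $\Psi_i(u,v)=\int_{-1}^1\Psi_{i-1}(u-|s|,\,v-|s-c_i|)\,ds$ for $u,v\in\mathbb{R}$. *)

(* Defs.v *)
From Stdlib Require Import Reals Lra ClassicalEpsilon.
Open Scope R_scope.

(* Riemann integral of f on [a,b]: the value RiemannInt pr for any proof pr of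
   Riemann integrability (all such proofs give the same value); an unspecified
   real if f is not Riemann integrable on [a,b]. *)
Definition Rint (f : R -> R) (a b : R) : R :=
  epsilon (inhabits 0) (fun I => exists pr : Riemann_integrable f a b, RiemannInt pr = I).

Definition Psi0 (u v : R) : R :=
  if Rle_dec 0 u then (if Rle_dec 0 v then 1 else 0) else 0.

(* c is 0-indexed: the paper's c_i is (c (i-1)).
   Psi c (S i) u v = \int_{-1}^{1} Psi c i (u - |s|) (v - |s - c_{i+1}|) ds. *)
Fixpoint Psi (c : nat -> R) (i : nat) (u v : R) : R :=
  match i with
  | O => Psi0 u v
  | S k => Rint (fun s => Psi c k (u - Rabs s) (v - Rabs (s - c k))) (-1) 1
  end.

Fixpoint l1norm (c : nat -> R) (n : nat) : R :=
  match n with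
  | O => 0
  | S k => l1norm c k + Rabs (c k)
  end.

(* Main.v *)
Require Import Defs.
From Stdlib Require Import Reals Lra Lia ClassicalEpsilon.
From Coquelicot Require Import Coquelicot.
Open Scope R_scope.


Lemma Rint_RInt f a b : ex_RInt f a b -> Rint f a b = RInt f a b.
Proof.
  intros H. unfold Rint.
  pose proof (ex_RInt_Reals_0 _ _ _ H) as pr.
  assert (E : exists I, exists pr : Riemann_integrable f a b, RiemannInt pr = I) by (exists (RiemannInt pr); exists pr; reflexivity).
  destruct (epsilon_spec (inhabits 0) _ E) as [pr' Hpr'].
  rewrite <- Hpr', (RInt_Reals f a b pr'). reflexivity.
Qed.

Lemma scalR (x y : R) : scal x y = x * y. Proof. reflexivity. Qed.
Lemma plusR (x y : R) : plus x y = x + y. Proof. reflexivity. Qed.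
Lemma minusR (x y : R) : minus x y = x - y. Proof. reflexivity. Qed.

Ltac dl := repeat match goal with H : ~ _ <= _ |- _ => apply Rnot_le_lt in H end.
Ltac mm := unfold Rmin, Rmax in *; repeat destruct Rle_dec; dl; lra.

Ltac rs := unfold plus, scal, minus, opp in *; simpl in *; unfold mult in *; simpl in *.

Definition indf (p q s : R) : R := if Rle_dec p s then if Rle_dec s q then 1 else 0 else 0.

Lemma indf_int p q a b : p <= q -> a <= b ->
  ex_RInt (indf p q) a b /\ RInt (indf p q) a b <= q - p.
Proof.
  intros Hpq Hab.
  set (p' := Rmin b (Rmax a p)). set (q' := Rmin b (Rmax p' q)).
  assert (H1 : a <= p') by (unfold p', Rmin, Rmax; repeat destruct Rle_dec; dl; lra).
  assert (H1' : p' <= b) by (unfold p', Rmin, Rmax; repeat destruct Rle_dec; dl; lra).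
  assert (H2 : p' <= q') by (unfold q', Rmin, Rmax; repeat destruct Rle_dec; dl; lra).
  assert (H3 : q' <= b) by (unfold q', Rmin, Rmax; repeat destruct Rle_dec; dl; lra).
  assert (E1 : forall x, Rmin a p' < x < Rmax a p' -> (fun _ => 0) x = indf p q x).
  { intros x Hx. rewrite Rmin_left in Hx by lra. rewrite Rmax_right in Hx by lra.
    unfold indf. destruct (Rle_dec p x); [|reflexivity].
    exfalso. revert Hx; unfold p', Rmin, Rmax; repeat destruct Rle_dec; intros; dl; lra. }
  assert (E2 : forall x, Rmin p' q' < x < Rmax p' q' -> (fun _ => 1) x = indf p q x).
  { intros x Hx. rewrite Rmin_left in Hx by lra. rewrite Rmax_right in Hx by lra.
    unfold indf. destruct (Rle_dec p x); [destruct (Rle_dec x q)|]; [reflexivity| |];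
    exfalso; revert Hx; unfold q', p', Rmin, Rmax; repeat destruct Rle_dec; intros; dl; lra. }
  assert (E3 : forall x, Rmin q' b < x < Rmax q' b -> (fun _ => 0) x = indf p q x).
  { intros x Hx. rewrite Rmin_left in Hx by lra. rewrite Rmax_right in Hx by lra.
    unfold indf. destruct (Rle_dec p x); [destruct (Rle_dec x q)|]; [|reflexivity|reflexivity].
    exfalso; revert Hx; unfold q', p', Rmin, Rmax; repeat destruct Rle_dec; intros; dl; lra. }
  assert (I1 := ex_RInt_ext _ _ _ _ E1 (ex_RInt_const a p' 0)).
  assert (I2 := ex_RInt_ext _ _ _ _ E2 (ex_RInt_const p' q' 1)).
  assert (I3 := ex_RInt_ext _ _ _ _ E3 (ex_RInt_const q' b 0)).
  assert (I12 := ex_RInt_Chasles _ _ _ _ I1 I2).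
  split. { exact (ex_RInt_Chasles _ _ _ _ I12 I3). }
  rewrite <- (RInt_Chasles _ _ _ _ I12 I3), <- (RInt_Chasles _ _ _ _ I1 I2).
  rewrite <- (RInt_ext _ _ _ _ E1), <- (RInt_ext _ _ _ _ E2), <- (RInt_ext _ _ _ _ E3).
  rewrite !RInt_const, !plusR, !scalR.
  assert (H4 : p' = b \/ p <= p') by (unfold p', Rmin, Rmax; repeat destruct Rle_dec; dl; lra).
  assert (H5 : q' - p' <= q - p) by (unfold q'; unfold Rmin, Rmax; repeat destruct Rle_dec; dl; lra).
  rs; lra.
Qed.

Lemma indf_ex p q a b : ex_RInt (indf p q) a b.
Proof.
  destruct (Rle_dec p q) as [Hpq|Hpq].
  - destruct (Rle_dec a b).
    + apply indf_int; lra.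
    + apply ex_RInt_swap. apply indf_int; lra.
  - apply (ex_RInt_ext (fun _ => 0)); [|apply ex_RInt_const].
    intros x _. unfold indf. repeat destruct Rle_dec; dl; lra.
Qed.

Lemma abs_iff (A al d s : R) : 0 < al ->
  (0 <= A - Rabs (al * s + d) <-> (-A - d)/al <= s /\ s <= (A - d)/al).
Proof.
  intros Ha.
  assert (E1 : al * ((-A - d)/al) = -A - d) by (field; lra).
  assert (E2 : al * ((A - d)/al) = A - d) by (field; lra).
  set (L := (-A - d)/al) in *. set (U := (A - d)/al) in *.
  unfold Rabs; destruct Rcase_abs; split; intros H; try destruct H; try split; nra.
Qed.

Lemma Psi0_ind (A B al d e s : R) : 0 < al ->
  Psi0 (A - Rabs (al * s + d)) (B - Rabs (al * s + e)) =
  indf (Rmax ((-A - d)/al) ((-B - e)/al)) (Rmin ((A - d)/al) ((B - e)/al)) s.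
Proof.
  intros Ha. pose proof (abs_iff A al d s Ha) as H1. pose proof (abs_iff B al e s Ha) as H2.
  unfold Psi0, indf.
  destruct (Rle_dec 0 (A - Rabs (al * s + d))) as [a1|a1];
  destruct (Rle_dec 0 (B - Rabs (al * s + e))) as [a2|a2];
  destruct (Rle_dec (Rmax ((-A - d)/al) ((-B - e)/al)) s) as [a3|a3];
  destruct (Rle_dec s (Rmin ((A - d)/al) ((B - e)/al))) as [a4|a4]; try reflexivity;
  exfalso; revert a3 a4; unfold Rmax, Rmin; repeat destruct Rle_dec; intros; tauto || (dl; tauto) || (dl; intuition lra).
Qed.

Lemma Int0 c A B al d e a b : 0 < al ->
  ex_RInt (fun s => Psi c 0 (A - Rabs (al*s+d)) (B - Rabs (al*s+e))) a b.
Proof.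
  intros Ha. eapply ex_RInt_ext; [|apply indf_ex].
  intros x _. simpl. symmetry. apply Psi0_ind. exact Ha.
Qed.

Definition Jf x x' := indf (Rmin x x') (Rmax x x') 0.

Lemma indf_ge0 p q s : 0 <= indf p q s.
Proof. unfold indf; repeat destruct Rle_dec; lra. Qed.

Lemma Jf_1 x x' : 0 <= x -> ~ 0 <= x' -> Jf x x' = 1.
Proof. intros. unfold Jf, indf, Rmin, Rmax; repeat destruct Rle_dec; dl; try lra. Qed.
Lemma Jf_1' x x' : 0 <= x' -> ~ 0 <= x -> Jf x x' = 1.
Proof. intros. unfold Jf, indf, Rmin, Rmax; repeat destruct Rle_dec; dl; try lra. Qed.

Lemma P0diff x y x' y' : Psi0 x y - Psi0 x' y' <= Jf x x' + Jf y y'.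
Proof.
  assert (0 <= Jf x x') by apply indf_ge0.
  assert (0 <= Jf y y') by apply indf_ge0.
  unfold Psi0.
  destruct (Rle_dec 0 x) as [a1|a1]; destruct (Rle_dec 0 y) as [a2|a2];
  destruct (Rle_dec 0 x') as [a3|a3]; destruct (Rle_dec 0 y') as [a4|a4]; try lra;
  first [ rewrite (Jf_1 x x') by assumption; lra
        | rewrite (Jf_1 y y') by assumption; lra
        | rewrite (Jf_1' x x') by assumption; lra
        | rewrite (Jf_1' y y') by assumption; lra ].
Qed.

Lemma Jabs u u' s d :
  Jf (u - Rabs (s - d)) (u' - Rabs (s - d)) <=
  indf (d - Rmax u u') (d - Rmin u u') s + indf (d + Rmin u u') (d + Rmax u u') s.
Proof.
  pose proof (indf_ge0 (d - Rmax u u') (d - Rmin u u') s).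
  pose proof (indf_ge0 (d + Rmin u u') (d + Rmax u u') s).
  unfold Jf, indf at 1.
  destruct (Rle_dec _ 0) as [h1|h1]; [|lra].
  destruct (Rle_dec 0 _) as [h2|h2]; [|lra].
  assert (Rmin u u' <= Rabs (s - d) <= Rmax u u') by (revert h1 h2; unfold Rmin, Rmax; repeat destruct Rle_dec; intros; dl; lra).
  unfold indf; revert H1; unfold Rabs; destruct Rcase_abs; intros;
  repeat destruct Rle_dec; dl; lra.
Qed.

Lemma RIntp f g a b : ex_RInt f a b -> ex_RInt g a b ->
  RInt (fun x => f x + g x) a b = RInt f a b + RInt g a b.
Proof. intros. exact (RInt_plus f g a b H H0). Qed.
Lemma exRIntp f g a b : ex_RInt f a b -> ex_RInt g a b -> ex_RInt (fun x => f x + g x) a b.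
Proof. intros. exact (ex_RInt_plus f g a b H H0). Qed.

Definition IntP c k := forall A B al d e a b, 0 < al ->
  ex_RInt (fun s => Psi c k (A - Rabs (al*s+d)) (B - Rabs (al*s+e))) a b.

Lemma IntP_base c k u v a b : IntP c k ->
  ex_RInt (fun s => Psi c k (u - Rabs s) (v - Rabs (s - c k))) a b.
Proof.
  intros H. eapply ex_RInt_ext; [|apply (H u v 1 0 (- c k) a b); lra].
  intros x _. simpl. replace (1*x+0) with x by ring. replace (1*x + - c k) with (x - c k) by ring. reflexivity.
Qed.

Lemma PsiS c k u v : IntP c k ->
  Psi c (S k) u v = RInt (fun s => Psi c k (u - Rabs s) (v - Rabs (s - c k))) (-1) 1.
Proof. intros H. simpl. apply Rint_RInt. apply IntP_base; auto. Qed.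

Lemma Lip0 c u v u' v' :
  Psi c 1 u v - Psi c 1 u' v' <= 2 * (Rabs (u - u') + Rabs (v - v')).
Proof.
  assert (HI : IntP c 0) by (intros ? ? ? ? ? ? ? Hal; apply Int0; exact Hal).
  rewrite !PsiS by exact HI.
  set (mu := Rmax u u'). set (nu := Rmin u u'). set (mv := Rmax v v'). set (nv := Rmin v v').
  assert (Hu : mu - nu = Rabs (u - u')) by (unfold mu, nu, Rmax, Rmin, Rabs; repeat destruct Rle_dec; destruct Rcase_abs; dl; lra).
  assert (Hv : mv - nv = Rabs (v - v')) by (unfold mv, nv, Rmax, Rmin, Rabs; repeat destruct Rle_dec; destruct Rcase_abs; dl; lra).
  assert (Hun : nu <= mu) by (unfold mu, nu, Rmax, Rmin; repeat destruct Rle_dec; dl; lra).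
  assert (Hvn : nv <= mv) by (unfold mv, nv, Rmax, Rmin; repeat destruct Rle_dec; dl; lra).
  set (h1 := indf (0 - mu) (0 - nu)). set (h2 := indf (0 + nu) (0 + mu)).
  set (h3 := indf (c 0%nat - mv) (c 0%nat - nv)). set (h4 := indf (c 0%nat + nv) (c 0%nat + mv)).
  destruct (indf_int (0 - mu) (0 - nu) (-1) 1) as [e1 i1]; try lra.
  destruct (indf_int (0 + nu) (0 + mu) (-1) 1) as [e2 i2]; try lra.
  destruct (indf_int (c 0%nat - mv) (c 0%nat - nv) (-1) 1) as [e3 i3]; try lra.
  destruct (indf_int (c 0%nat + nv) (c 0%nat + mv) (-1) 1) as [e4 i4]; try lra.
  fold h1 in e1, i1. fold h2 in e2, i2. fold h3 in e3, i3. fold h4 in e4, i4.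
  assert (eg := IntP_base c 0 u' v' (-1) 1 HI).
  assert (ef := IntP_base c 0 u v (-1) 1 HI).
  assert (e12 := exRIntp _ _ _ _ e1 e2).
  assert (e123 := exRIntp _ _ _ _ e12 e3).
  assert (eh := exRIntp _ _ _ _ e123 e4).
  assert (egh := exRIntp _ _ _ _ eg eh).
  assert (HL := RInt_le _ _ (-1) 1 ltac:(lra) ef egh).
  assert (HL' : RInt (fun s => Psi c 0 (u - Rabs s) (v - Rabs (s - c 0%nat))) (-1) 1 <= RInt (fun x => Psi c 0 (u' - Rabs x) (v' - Rabs (x - c 0%nat)) + (h1 x + h2 x + h3 x + h4 x)) (-1) 1).
  { apply HL. intros x _. simpl.
    pose proof (P0diff (u - Rabs x) (v - Rabs (x - c 0%nat)) (u' - Rabs x) (v' - Rabs (x - c 0%nat))).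
    pose proof (Jabs u u' x 0). replace (x - 0) with x in H0 by ring.
    pose proof (Jabs v v' x (c 0%nat)).
    fold mu nu mv nv h1 h2 h3 h4 in H0, H1. lra. }
  rewrite (RIntp _ _ _ _ eg eh), (RIntp _ _ _ _ e123 e4), (RIntp _ _ _ _ e12 e3), (RIntp _ _ _ _ e1 e2) in HL'.
  lra.
Qed.

Lemma cont_of_lip (F : R -> R) K : 0 <= K -> (forall x y, F x - F y <= K * Rabs (x - y)) ->
  forall z, continuous F z.
Proof.
  intros HK HF z. apply continuity_pt_filterlim.
  unfold continuity_pt, continue_in, limit1_in, limit_in. intros eps Heps.
  exists (eps / (K + 1)). split.
  { apply Rdiv_lt_0_compat; lra. }
  intros x [_ Hx]. simpl in *. unfold R_dist in *.
  pose proof (HF x z). pose proof (HF z x).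
  rewrite Rabs_minus_sym in H0.
  assert (K * Rabs (x - z) < eps).
  { assert (Hd : (K+1) * (eps / (K+1)) = eps) by (field; lra).
    assert (0 <= Rabs (x - z)) by apply Rabs_pos. nra. }
  unfold Rabs at 1; destruct Rcase_abs; lra.
Qed.

Lemma abs_lip A al d x y : 0 < al ->
  Rabs ((A - Rabs (al*x+d)) - (A - Rabs (al*y+d))) <= al * Rabs (x - y).
Proof.
  intros Ha. replace ((A - Rabs (al*x+d)) - (A - Rabs (al*y+d))) with (Rabs (al*y+d) - Rabs (al*x+d)) by ring.
  eapply Rle_trans. apply Rabs_triang_inv2.
  replace (al * y + d - (al * x + d)) with (al * (y - x)) by ring.
  rewrite Rabs_mult, Rabs_right by lra. rewrite Rabs_minus_sym. lra.
Qed.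

Definition Lip c k := forall u v u' v',
  Psi c (S k) u v - Psi c (S k) u' v' <= 2 ^ (S k) * (Rabs (u - u') + Rabs (v - v')).

Lemma Int_of_Lip c k : Lip c k -> IntP c (S k).
Proof.
  intros HL A B al d e a b Ha.
  apply (@ex_RInt_continuous R_CompleteNormedModule). intros z _.
  apply (cont_of_lip _ (2 ^ S k * (2 * al))).
  { apply Rmult_le_pos; [apply pow_le|]; lra. }
  intros x y. eapply Rle_trans. apply HL.
  pose proof (abs_lip A al d x y Ha). pose proof (abs_lip B al e x y Ha).
  assert (0 <= 2 ^ S k) by (apply pow_le; lra).
  assert (0 <= Rabs (x - y)) by apply Rabs_pos. nra.
Qed.

Lemma Lip_step c k : Lip c k -> IntP c (S k) -> Lip c (S k).
Proof.
  intros HL HI u v u' v'.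
  rewrite !(PsiS c (S k)) by exact HI.
  set (K := 2 ^ S k * (Rabs (u - u') + Rabs (v - v'))).
  assert (ef := IntP_base c (S k) u v (-1) 1 HI).
  assert (eg := IntP_base c (S k) u' v' (-1) 1 HI).
  assert (egK := exRIntp _ (fun _ => K) _ _ eg (ex_RInt_const (-1) 1 K)).
  assert (HL' := RInt_le _ _ (-1) 1 ltac:(lra) ef egK).
  assert (EQ := RIntp _ _ _ _ eg (ex_RInt_const (-1) 1 K)). cbv beta in EQ, HL'.
  rewrite EQ, RInt_const in HL'.
  clear EQ.
  assert (E : RInt (fun s => Psi c (S k) (u - Rabs s) (v - Rabs (s - c (S k)))) (-1) 1 <=
    RInt (fun s => Psi c (S k) (u' - Rabs s) (v' - Rabs (s - c (S k)))) (-1) 1 + scal (1 - -1) K).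
  { apply HL'. intros x _. pose proof (HL (u - Rabs x) (v - Rabs (x - c (S k))) (u' - Rabs x) (v' - Rabs (x - c (S k)))).
    replace (u - Rabs x - (u' - Rabs x)) with (u - u') in H by ring.
    replace (v - Rabs (x - c (S k)) - (v' - Rabs (x - c (S k)))) with (v - v') in H by ring.
    fold K in H. lra. }
  rs. unfold K in *. simpl in *. lra.
Qed.

Lemma LipInt c k : Lip c k /\ IntP c (S k).
Proof.
  induction k as [|k [IH1 IH2]].
  - assert (L : Lip c 0) by (intros u v u' v'; rewrite pow_1; pose proof (Lip0 c u v u' v'); lra).
    split; [exact L | apply Int_of_Lip; exact L].
  - assert (L := Lip_step c k IH1 IH2). split; [exact L | apply Int_of_Lip; exact L].
Qed.

Lemma IntAll c k : IntP c k.
Proof.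
  destruct k. - intros ? ? ? ? ? ? ? H; apply Int0; exact H. - apply LipInt.
Qed.

Lemma Psi_ge0 c k u v : 0 <= Psi c k u v.
Proof.
  revert u v; induction k; intros u v.
  - simpl. unfold Psi0; repeat destruct Rle_dec; lra.
  - rewrite PsiS by apply IntAll. apply RInt_ge_0. lra. apply IntP_base, IntAll.
    intros; apply IHk.
Qed.

Lemma Psi_mono c k u v u' v' : u <= u' -> v <= v' -> Psi c k u v <= Psi c k u' v'.
Proof.
  revert u v u' v'; induction k; intros u v u' v' H1 H2.
  - simpl. unfold Psi0; repeat destruct Rle_dec; dl; lra.
  - rewrite !PsiS by apply IntAll. apply RInt_le. lra. apply IntP_base, IntAll. apply IntP_base, IntAll.
    intros; apply IHk; lra.
Qed.

Lemma RIntC f a b c : ex_RInt f a b -> ex_RInt f b c -> RInt f a b + RInt f b c = RInt f a c.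
Proof. intros. exact (RInt_Chasles f a b c H H0). Qed.

Lemma RInts f a b l : ex_RInt f a b -> RInt (fun x => l * f x) a b = l * RInt f a b.
Proof. intros. exact (RInt_scal f a b l H). Qed.

Lemma exRInts f a b l : ex_RInt f a b -> ex_RInt (fun x => l * f x) a b.
Proof. intros. exact (ex_RInt_scal f a b l H). Qed.

Lemma absb a x b : 0 <= a -> Rabs (a * x + b) <= a * Rabs x + Rabs b.
Proof.
  intros Ha. eapply Rle_trans. apply Rabs_triang. rewrite Rabs_mult, (Rabs_right a) by lra. lra.
Qed.

Lemma l1S c k : 0 <= c k -> l1norm c (S k) = l1norm c k + c k.
Proof. intros H. simpl. rewrite Rabs_right by lra. reflexivity. Qed.

Lemma KL n c a be (Ha : 0 < a) (Hb : 0 <= be) (Hg : 0 <= 1 - a - be)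
  (Hc : forall i, (i < n)%nat -> 0 <= c i) (Hab : forall i, (i < n)%nat -> a + be * c i <= 1) :
  forall k, (k <= n)%nat -> forall u v,
  a ^ k * Psi c k u v <= Psi c k (a * u + be * l1norm c k) (a * v + (1 - a - be) * l1norm c k).
Proof.
  induction k as [|k IH]; intros Hk u v.
  - simpl. rewrite Rmult_1_l. unfold Psi0; repeat destruct Rle_dec; dl; nra.
  - assert (Hk' : (k < n)%nat) by lia.
    pose proof (Hc k Hk') as ck0. pose proof (Hab k Hk') as ck1.
    rewrite l1S by exact ck0.
    set (C := l1norm c k) in *. set (ck := c k) in *.
    set (U := a * u + be * (C + ck)). set (V := a * v + (1 - a - be) * (C + ck)).
    rewrite !PsiS by apply IntAll. fold ck.
    set (g := fun s => Psi c k (U - Rabs s) (V - Rabs (s - ck))).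
    set (f := fun s => Psi c k (u - Rabs s) (v - Rabs (s - ck))).
    assert (Hgi : forall p q, ex_RInt g p q) by (intros; apply IntP_base, IntAll).
    assert (Hfi : ex_RInt f (-1) 1) by (apply IntP_base, IntAll).
    set (lo := a * -1 + be * ck). set (hi := a * 1 + be * ck).
    assert (Hbc : 0 <= be * ck) by (apply Rmult_le_pos; lra).
    assert (R1 : RInt g lo hi <= RInt g (-1) 1).
    { rewrite <- (RIntC g (-1) lo 1) by auto. rewrite <- (RIntC g lo hi 1) by auto.
      assert (0 <= RInt g (-1) lo) by (apply RInt_ge_0; [unfold lo; lra | auto | intros; apply Psi_ge0]).
      assert (0 <= RInt g hi 1) by (apply RInt_ge_0; [unfold hi; lra | auto | intros; apply Psi_ge0]).
      lra. }
    set (gc := fun y => g (a * y + be * ck)).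
    assert (Hgc : ex_RInt gc (-1) 1).
    { eapply ex_RInt_ext; [|apply (IntAll c k U V a (be * ck) (be * ck - ck) (-1) 1 Ha)].
      intros x _. unfold gc, g. do 3 f_equal. ring. }
    assert (R2 := RInt_comp_lin g a (be * ck) (-1) 1 (Hgi _ _)).
    rewrite RInt_scal in R2 by exact Hgc. rs. fold lo hi in R2.
    assert (R3 : RInt (fun y => a ^ k * f y) (-1) 1 <= RInt gc (-1) 1).
    { apply RInt_le; [lra | apply exRInts; auto | auto |].
      intros y _. unfold f, gc, g.
      eapply Rle_trans. apply IH. lia.
      apply Psi_mono.
      - pose proof (absb a y (be * ck) ltac:(lra)). rewrite (Rabs_right (be*ck)) in H by lra.
        unfold U. lra.
      - pose proof (absb a (y - ck) (- ((1 - a - be) * ck)) ltac:(lra)).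
        rewrite Rabs_Ropp, (Rabs_right ((1 - a - be) * ck)) in H by (apply Rle_ge, Rmult_le_pos; lra).
        replace (a * y + be * ck - ck) with (a * (y - ck) + - ((1 - a - be) * ck)) by ring.
        unfold V. lra. }
    rewrite RInts in R3 by exact Hfi.
    simpl pow. fold f g.
    assert (0 <= a ^ k * RInt f (-1) 1 ) by (apply Rmult_le_pos; [apply pow_le; lra | apply RInt_ge_0; [lra|auto|intros; apply Psi_ge0]]).
    fold gc in R2. assert (a * (a ^ k * RInt f (-1) 1) <= a * RInt gc (-1) 1) by (apply Rmult_le_compat_l; lra). rewrite Rmult_assoc. lra.
Qed.

Lemma Pos n c d (Hd0 : 0 < d) (Hd1 : d <= 1)
  (Hc : forall i, (i < n)%nat -> 0 <= c i <= 1) :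
  forall k, (k <= n)%nat -> forall u v, l1norm c k + INR k * d <= u -> INR k * d <= v ->
  d ^ k <= Psi c k u v.
Proof.
  induction k as [|k IH]; intros Hk u v Hu Hv.
  - simpl in *. unfold Psi0. repeat destruct Rle_dec; dl; lra.
  - assert (Hk' : (k < n)%nat) by lia. destruct (Hc k Hk') as [ck0 ck1].
    rewrite l1S in Hu by exact ck0. rewrite S_INR in Hu, Hv.
    rewrite PsiS by apply IntAll.
    set (g := fun s => Psi c k (u - Rabs s) (v - Rabs (s - c k))).
    assert (Hgi : forall p q, ex_RInt g p q) by (intros; apply IntP_base, IntAll).
    assert (Hg0 : forall p q, p <= q -> 0 <= RInt g p q) by
      (intros; apply RInt_ge_0; [lra | auto | intros; apply Psi_ge0]).
    rewrite <- (RIntC g (-1) (c k - d) 1) by auto.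
    rewrite <- (RIntC g (c k - d) (c k) 1) by auto.
    assert (0 <= RInt g (-1) (c k - d)) by (apply Hg0; lra).
    assert (0 <= RInt g (c k) 1) by (apply Hg0; lra).
    assert (H3 : RInt (fun _ => d ^ k) (c k - d) (c k) <= RInt g (c k - d) (c k)).
    { apply RInt_le; [lra | apply ex_RInt_const | auto |].
      intros y Hy. unfold g. apply IH; [lia| |].
      - assert (Rabs y <= c k + d) by (unfold Rabs; destruct Rcase_abs; lra). lra.
      - assert (Rabs (y - c k) <= d) by (unfold Rabs; destruct Rcase_abs; lra). lra. }
    rewrite RInt_const in H3. rs. simpl. nra.
Qed.

Lemma c_le_l1 c n : (forall i, (i < n)%nat -> 0 <= c i) ->
  forall i, (i < n)%nat -> c i <= l1norm c n /\ 0 <= l1norm c n.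
Proof.
  induction n as [|n IH]; intros Hc i Hi; [lia|].
  rewrite l1S by (apply Hc; lia).
  assert (Hn : 0 <= l1norm c n).
  { destruct n. simpl; lra. destruct (IH (fun j Hj => Hc j ltac:(lia)) 0%nat ltac:(lia)); auto. }
  assert (0 <= c n) by (apply Hc; lia).
  destruct (Nat.eq_dec i n) as [->|Hne]; [lra|].
  destruct (IH (fun j Hj => Hc j ltac:(lia)) i ltac:(lia)). lra.
Qed.

Lemma l1_ge0 c n : (forall i, (i < n)%nat -> 0 <= c i) -> 0 <= l1norm c n.
Proof.
  intros Hc. destruct n. simpl; lra. apply (c_le_l1 c (S n) Hc 0%nat). lia.
Qed.

Lemma div_lb x N D : 0 < D -> x * D <= N -> x <= N / D.
Proof.
  intros HD H. replace x with ((x * D) * / D) by (field; lra).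
  unfold Rdiv. apply Rmult_le_compat_r; [left; apply Rinv_0_lt_compat; lra | lra].
Qed.

Theorem mainTheorem17 (n : nat) (c : nat -> R) (r M : R)
  (hc : forall i : nat, (i < n)%nat -> 0 <= c i)
  (hr0 : 0 < r) (hr1 : r <= 1)
  (hcr : l1norm c n <= r)
  (hM : 0 < M) :
  Psi c n 1 r / Psi c n (1 + INR n / M) (r * (1 + INR n / M))
    >= (M / (M + INR n)) ^ (2 * n).
Proof.
  destruct n as [|n'].
  - simpl. replace (1 + 0 / M) with 1 by (field; lra). replace (r * 1) with r by ring.
    unfold Psi0. repeat destruct Rle_dec; dl; try lra.
  - set (n := S n') in *.
    assert (Hn : 0 < INR n) by (unfold n; rewrite S_INR; pose proof (pos_INR n'); lra).
    set (la := 1 + INR n / M).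
    assert (Hla : 1 < la) by (unfold la; assert (0 < INR n / M) by (apply Rdiv_lt_0_compat; lra); lra).
    set (a := 1 / (2 * la - 1)). set (be := a * (la - 1)).
    assert (Ha : 0 < a) by (unfold a; apply Rdiv_lt_0_compat; lra).
    assert (Hala : a * la <= 1) by (unfold a; apply (Rmult_le_reg_r (2*la-1)); [lra|]; field_simplify; lra).
    assert (Ha2 : a * (2 * la - 1) = 1) by (unfold a; field; lra).
    assert (Hgam : 1 - a - be = 1 - a * la) by (unfold be; ring).
    assert (Hbe : 0 <= be) by (unfold be; nra).
    pose proof (l1_ge0 c n hc) as HC0.
    assert (Hci : forall i, (i < n)%nat -> 0 <= c i <= 1).
    { intros i Hi. split; [auto|]. destruct (c_le_l1 c n hc i Hi). lra. }
    assert (Hab : forall i, (i < n)%nat -> a + be * c i <= 1).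
    { intros i Hi. destruct (Hci i Hi). assert (be * c i <= be) by nra. nra. }
    pose proof (KL n c a be Ha Hbe ltac:(lra) hc Hab n (le_n n) la (r * la)) as K.
    set (C := l1norm c n) in *.
    assert (K2 : Psi c n (a * la + be * C) (a * (r * la) + (1 - a - be) * C) <= Psi c n 1 r).
    { apply Psi_mono.
      - assert (be * C <= be * 1) by (apply Rmult_le_compat_l; lra). unfold be in *. nra.
      - rewrite Hgam. assert ((1 - a * la) * C <= (1 - a * la) * r) by (apply Rmult_le_compat_l; lra). nra. }
    set (D := Psi c n la (r * la)).
    set (d := Rmin 1 (Rmin ((la - 1) / INR n) (r * la / INR n))).
    assert (Hd0 : 0 < d).
    { unfold d, Rmin. assert (0 < (la - 1) / INR n) by (apply Rdiv_lt_0_compat; lra).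
      assert (0 < r * la / INR n) by (apply Rdiv_lt_0_compat; nra).
      repeat destruct Rle_dec; lra. }
    assert (Hd1 : d <= 1) by (unfold d; apply Rmin_l).
    assert (Hdn1 : INR n * d <= la - 1).
    { assert (d <= (la - 1) / INR n) by (unfold d; eapply Rle_trans; [apply Rmin_r | apply Rmin_l]).
      replace (la - 1) with (INR n * ((la - 1) / INR n)) by (field; lra).
      apply Rmult_le_compat_l; lra. }
    assert (Hdn2 : INR n * d <= r * la).
    { assert (d <= r * la / INR n) by (unfold d; eapply Rle_trans; [apply Rmin_r | apply Rmin_r]).
      replace (r * la) with (INR n * (r * la / INR n)) by (field; lra).
      apply Rmult_le_compat_l; lra. }
    assert (HD : 0 < D).
    { eapply Rlt_le_trans; [apply pow_lt; exact Hd0|].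
      apply (Pos n c d Hd0 Hd1 Hci n (le_n n)); fold C; lra. }
    fold D in K.
    assert (Hq : a ^ n <= Psi c n 1 r / D) by (apply div_lb; lra).
    apply Rle_ge. eapply Rle_trans; [|exact Hq].
    rewrite pow_mult. apply pow_incr. split.
    + apply pow_le. apply Rlt_le, Rdiv_lt_0_compat; lra.
    + replace (M / (M + INR n)) with (1 / la) by (unfold la; field; lra).
      replace ((1 / la) ^ 2) with (/ (la * la)) by (field; lra).
      replace a with (/ (2 * la - 1)) by (unfold a; field; lra).
      apply Rinv_le_contravar; nra.
Qed.
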